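(* Let $H=\{a_1,\dots,a_7\}$, let $\mathcal R$ be the equivalence relation on $H$ with classes $\{a_1,a_2,a_3\}$ and $\{a_4,a_5,a_6,a_7\}$, let $\mathcal Q$ be the equivalence relation with classes $\{a_1,a_2,a_4,a_5\}$ and $\{a_3,a_6,a_7\}$, and let $\mathcal H=(H;\mathcal R,\mathcal Q,C_{a_1},\dots,C_{a_7})$ with $C_{a}=\{a\}$. Then $\mathcal H$ is $2$-rigid and strongly $2$-rectangular, but not congruence $2$-permutable; in particular $(a_1,a_6)\in\mathcal R\circ_2\mathcal Q$ while $(a_1,a_6)\notin\mathcal Q\circ_2\mathcal R$.
   Context: $\langle\mathcal H\rangle_2$: relations defined by $\exists^{\equiv2}\mathbf y_1\cdots\exists^{\equiv2}\mathbf y_s\,\Phi$ with $\Phi$ a conjunction of atomic formulas over relations of $\mathcal H$ and equality, where $\exists^{\equiv2}\mathbf y\,\Psi(\mathbf x,\mathbf y)$ holds at $\mathbf a$ iff the number of $\mathbf b$ with $\Psi(\mathbf a,\mathbf b)$ is odd. Strongly $2$-rectangular: every relation of arity $\ge2$ in $\langle\mathcal H\rangle_2$ is rectangular (for every split of coordinates into two nonempty parts, $(\mathbf a,\mathbf c),(\mathbf a,\mathbf d),(\mathbf b,\mathbf c)\in\mathcal S$ implies $(\mathbf b,\mathbf d)\in\mathcal S$). For binary relations, $(\mathbf a,\mathbf b)\in\alpha\circ_2\beta$ iff the number of $\mathbf c$ with $(\mathbf a,\mathbf c)\in\alpha,(\mathbf c,\mathbf b)\in\beta$ is odd. A $2$-congruence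 of $\mathcal S\in\langle\mathcal H\rangle_2$ is an equivalence relation on $\mathcal S$ belonging to $\langle\mathcal H\rangle_2$; $\mathcal H$ is congruence $2$-permutable if $\alpha\circ_2\beta=\beta\circ_2\alpha$ for all $2$-congruences $\alpha,\beta$ of every $\mathcal S\in\langle\mathcal H\rangle_2$. $2$-rigid: no automorphism of order 2. *)

(* Defs.v *)
From mathcomp Require Import all_boot fingroup perm.
Set Implicit Arguments. Unset Strict Implicit. Unset Printing Implicit Defensive.

Definition tup (T : finType) (n : nat) := {ffun 'I_n -> T}.
Definition relT (T : finType) := {k : nat & {set tup T k}}.
Definition relS (T : finType) (k : nat) : Type := {set tup T k}.

Definition rstruct (T : finType) := seq (relT T).

Definition nthrel (T : finType) (H : rstruct T) (r : nat) : relT T :=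
  nth (Tagged (relS T) (set0 : {set tup T 0})) H r.

(* atoms: R_r(x_{i1},...,x_{ik}) for the r-th relation of H, or x_i = x_j;
   variables are natural numbers *)
Inductive atom := ARel of nat & seq nat | AEq of nat & nat.

Definition atom_sat (T : finType) (H : rstruct T) (env : nat -> T) (a : atom)
  : bool :=
  match a with
  | ARel r args =>
      (size args == tag (nthrel H r)) &&
      ([ffun i : 'I_(tag (nthrel H r)) => env (nth 0 args i)]
         \in tagged (nthrel H r))
  | AEq i j => env i == env j
  end.

Definition upd (T : finType) (env : nat -> T) (off k : nat) (b : tup T k)
  : nat -> T :=
  fun i => if off <= i then
             (if insub (i - off) is Some j then b j else env i)
           else env i.

(* exists^{=2} y_1 ... exists^{=2} y_s  Phi  where the block y_j has size
   the j-th element of bs and occupies the next variables starting at off *)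
Fixpoint sat_q (T : finType) (H : rstruct T) (bs : seq nat) (off : nat)
  (env : nat -> T) (Phi : seq atom) : bool :=
  match bs with
  | [::] => all (atom_sat H env) Phi
  | k :: bs' =>
      odd #|[pred b : tup T k | sat_q H bs' (off + k) (upd env off b) Phi]|
  end.

Definition atom_wf (T : finType) (H : rstruct T) (N : nat) (a : atom) : bool :=
  match a with
  | ARel r args => (r < size H) && (size args == tag (nthrel H r))
                   && all (fun i => i < N) args
  | AEq i j => (i < N) && (j < N)
  end.

(* S belongs to <H>_2 : defined by a parity-quantified primitive positive
   formula with free variables 0..n-1 *)
Definition definable2 (T : finType) (H : rstruct T) (n : nat)
  (S : {set tup T n}) : Prop :=
  exists (bs : seq nat) (Phi : seq atom),
    all (atom_wf H (n + sumn bs)) Phi /\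
    forall (env : nat -> T) (a : tup T n),
      (a \in S) = sat_q H bs n (upd env 0 a) Phi.

Definition rectangular (T : finType) (n : nat) (S : {set tup T n}) : Prop :=
  forall I : {set 'I_n}, I != set0 -> ~: I != set0 ->
  forall x y z : tup T n, x \in S -> y \in S -> z \in S ->
    (forall i, i \in I -> x i = y i) ->
    (forall i, i \notin I -> x i = z i) ->
    [ffun i => if i \in I then z i else y i] \in S.

Definition strongly_rect2 (T : finType) (H : rstruct T) : Prop :=
  forall (n : nat) (S : {set tup T n}), 2 <= n -> definable2 H S ->
    rectangular S.

Definition pairT (T : finType) (n : nat) (a b : tup T n) : tup T (n + n) :=
  [ffun i => match split i with inl j => a j | inr j => b j end].

Definition comp2 (T : finType) (n : nat) (al be : {set tup T (n + n)})
  (a b : tup T n) : bool :=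
  odd #|[pred c : tup T n | (pairT a c \in al) && (pairT c b \in be)]|.

Definition cong2 (T : finType) (H : rstruct T) (n : nat) (S : {set tup T n})
  (al : {set tup T (n + n)}) : Prop :=
  [/\ definable2 H al,
      (forall a b, pairT a b \in al -> a \in S /\ b \in S),
      (forall a, a \in S -> pairT a a \in al),
      (forall a b, pairT a b \in al -> pairT b a \in al) &
      (forall a b c, pairT a b \in al -> pairT b c \in al -> pairT a c \in al)].

Definition cong_permutable2 (T : finType) (H : rstruct T) : Prop :=
  forall (n : nat) (S : {set tup T n}) (al be : {set tup T (n + n)}),
    definable2 H S -> cong2 H S al -> cong2 H S be ->
    forall a b, comp2 al be a b = comp2 be al a b.

Definition is_aut (T : finType) (H : rstruct T) (s : {perm T}) : Prop :=
  forall r, r < size H ->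
  forall t : tup T (tag (nthrel H r)),
    (t \in tagged (nthrel H r)) = ([ffun i => s (t i)] \in tagged (nthrel H r)).

Definition rigid2 (T : finType) (H : rstruct T) : Prop :=
  ~ exists s : {perm T}, is_aut H s /\ #[s]%g = 2.

Definition el (k : nat) : 'I_7 := inord k.  (* a_{k+1} = el k *)

Definition relR : {set tup 'I_7 2} :=
  [set t : tup _ _ | (val (t ord0) < 3) == (val (t ord_max) < 3)].
Definition inQ1 (x : 'I_7) : bool := val x \in [:: 0; 1; 3; 4].
Definition relQ : {set tup 'I_7 2} :=
  [set t : tup _ _ | inQ1 (t ord0) == inQ1 (t ord_max)].
Definition relC (a : 'I_7) : {set tup 'I_7 1} := [set t : tup _ _ | t ord0 == a].

Definition Hs : rstruct 'I_7 :=
  Tagged (relS 'I_7) relR :: Tagged (relS 'I_7) relQ ::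
  [seq Tagged (relS 'I_7) (relC a) | a <- enum 'I_7].

Definition tup1 (a : 'I_7) : tup 'I_7 1 := [ffun _ => a].

(* Main.v *)
Require Import Defs.
From mathcomp Require Import all_boot fingroup perm zify.
Set Implicit Arguments. Unset Strict Implicit. Unset Printing Implicit Defensive.

Inductive term := TV of nat | TC of 'I_7.
Inductive gatom := GEq of term & term | GR of term & term | GQ of term & term | GF.

Definition ev (env : nat -> 'I_7) t := match t with TV i => env i | TC c => c end.
Definition Rb (x y : 'I_7) := (val x < 3) == (val y < 3).
Definition Qb (x y : 'I_7) := inQ1 x == inQ1 y.
Definition gas env g := match g with
  | GEq s t => ev env s == ev env t
  | GR s t => Rb (ev env s) (ev env t)
  | GQ s t => Qb (ev env s) (ev env t)
  | GF => false end.
Definition gsat env L := all (gas env) L.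

Lemma gsat_ext env env' L : env =1 env' -> gsat env L = gsat env' L.
Proof.
move=> E; elim: L => //= g L ->; congr andb.
have Et : forall t, ev env t = ev env' t by case=> //= i; rewrite E.
by case: g => //= s t; rewrite !Et.
Qed.

Definition isV y t := if t is TV i then i == y else false.
Definition setv (env : nat -> 'I_7) y v := fun i => if i == y then v else env i.
Lemma ev_setv env y v t : ev (setv env y v) t = if isV y t then v else ev env t.
Proof. by case: t => [i|c] //=; rewrite /setv. Qed.
Definition sbt y u t := if isV y t then u else t.
Definition sba y u g := match g with
  | GEq s t => GEq (sbt y u s) (sbt y u t)
  | GR s t => GR (sbt y u s) (sbt y u t)
  | GQ s t => GQ (sbt y u s) (sbt y u t)
  | GF => GF end.
Lemma gsat_subst env y u L : gsat (setv env y (ev env u)) L = gsat env (map (sba y u) L).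
Proof.
have Et : forall t, ev (setv env y (ev env u)) t = ev env (sbt y u t).
  by move=> t; rewrite ev_setv /sbt; case: (isV y t).
by elim: L => //= g L ->; case: g => //= s t; rewrite !Et.
Qed.

Fixpoint feq y L : option term := match L with
 | [::] => None
 | GEq s t :: L' => if isV y s && ~~ isV y t then Some t
                    else if isV y t && ~~ isV y s then Some s else feq y L'
 | _ :: L' => feq y L' end.

Lemma feq_some y L t : feq y L = Some t ->
  ~~ isV y t /\ forall env v, gsat (setv env y v) L -> v = ev env t.
Proof.
elim: L => [|g L IH] //=.
case: g => [s u|s u|s u|] /=; try (move/IH => [h1 h2]; split=> // env v /andP[_]; exact: h2).
case: ifP => [/andP[hs hu] [<-]|h1].
  by split=> // env v /andP[/eqP]; rewrite !ev_setv hs (negbTE hu).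
case: ifP => [/andP[hu hs] [<-]|h2].
  by split=> // env v /andP[/eqP]; rewrite !ev_setv hu (negbTE hs) => ->.
move/IH => [h3 h4]; split=> // env v /andP[_]; exact: h4.
Qed.

Lemma comb (b0 b : bool) (x0 x y0 y : bool) :
  [&& b0, x0 & y0] && [&& b, x & y] = [&& b0 && b, x0 && x & y0 && y].
Proof. by case: b0; case: b; case: x0; case: x; case: y0; case: y. Qed.

Lemma feq_none y L : feq y L = None -> forall env, exists b uR uQ,
  forall v, gsat (setv env y v) L = [&& b, all (Rb v) uR & all (Qb v) uQ].
Proof.
elim: L => [|g L IH] /=; first by move=> _ env; exists true, [::], [::].
have step : forall env, (exists b0 uR0 uQ0, forall v,
    gas (setv env y v) g = [&& b0, all (Rb v) uR0 & all (Qb v) uQ0]) ->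
    feq y L = None -> exists b uR uQ, forall v,
    gas (setv env y v) g && gsat (setv env y v) L = [&& b, all (Rb v) uR & all (Qb v) uQ].
  move=> env [b0 [uR0 [uQ0 H0]]] /IH /(_ env) [b [uR [uQ H]]].
  exists (b0 && b), (uR0 ++ uR), (uQ0 ++ uQ) => v.
  by rewrite H0 H !all_cat comb.
case: g step => [s u|s u|s u|] step /=.
- case: ifP => // h1; case: ifP => // h2 hL env; apply: (step env) => //=.
  case hs: (isV y s); case hu: (isV y u); rewrite hs hu /= in h1 h2 => //.
  + by exists true, [::], [::] => v; rewrite !ev_setv hs hu eqxx.
  + by exists (ev env s == ev env u), [::], [::] => v; rewrite !ev_setv hs hu ?andbT.
- move=> hL env; apply: (step env) => //=.
  case hs: (isV y s); case hu: (isV y u).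
  + by exists true, [::], [::] => v; rewrite !ev_setv hs hu /Rb eqxx.
  + by exists true, [:: ev env u], [::] => v; rewrite !ev_setv hs hu /= ?andbT.
  + by exists true, [:: ev env s], [::] => v; rewrite !ev_setv hs hu /= /Rb eq_sym ?andbT.
  + by exists (Rb (ev env s) (ev env u)), [::], [::] => v; rewrite !ev_setv hs hu ?andbT.
- move=> hL env; apply: (step env) => //=.
  case hs: (isV y s); case hu: (isV y u).
  + by exists true, [::], [::] => v; rewrite !ev_setv hs hu /Qb eqxx.
  + by exists true, [::], [:: ev env u] => v; rewrite !ev_setv hs hu /= ?andbT.
  + by exists true, [::], [:: ev env s] => v; rewrite !ev_setv hs hu /= /Qb eq_sym ?andbT.
  + by exists (Qb (ev env s) (ev env u)), [::], [::] => v; rewrite !ev_setv hs hu ?andbT.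
- by move=> hL env; apply: (step env) => //; exists false, [::], [::].
Qed.

Lemma core (f g : bool -> bool) :
  odd #|[pred v : 'I_7 | f (val v < 3) && g (inQ1 v)]| = f true && g false.
Proof.
rewrite -sum1_card big_mkcond /= !big_ord_recl big_ord0 /= !inE /=.
rewrite /inQ1 /=.
by case: (f true); case: (f false); case: (g true); case: (g false).
Qed.

Lemma el_val k : k < 7 -> val (el k) = k.
Proof. by move=> h; rewrite /el /= inordK. Qed.
Lemma a3R : (val (el 2) < 3) = true. Proof. by rewrite el_val. Qed.
Lemma a3Q : inQ1 (el 2) = false. Proof. by rewrite /inQ1 el_val. Qed.

Lemma elim1 y L : exists L', forall env,
  odd #|[pred v : 'I_7 | gsat (setv env y v) L]| = gsat env L'.
Proof.
case E: (feq y L) => [t|].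
- have [ht H] := feq_some E.
  exists (map (sba y t) L) => env; rewrite -gsat_subst.
  case Hs: (gsat (setv env y (ev env t)) L).
    have -> : #|[pred v | gsat (setv env y v) L]| = 1; last by [].
    transitivity #|pred1 (ev env t)|; last by rewrite card1.
    apply: eq_card => v; rewrite !inE.
    by apply/idP/eqP => [/H //| ->].
  rewrite eq_card0 // => v; rewrite !inE; apply/negP => /[dup] /H ->.
  by rewrite Hs.
- exists (map (sba y (TC (el 2))) L) => env; rewrite -gsat_subst /=.
  have [b [uR [uQ Hv]]] := feq_none E env.
  rewrite (eq_card (B := [pred v : 'I_7 |
     (fun c => b && all (fun u => c == (val u < 3)) uR) (val v < 3) &&
     (fun c => all (fun u => c == inQ1 u) uQ) (inQ1 v)])); last first.
    by move=> v; rewrite !inE Hv /Rb /Qb andbA.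
  by rewrite (core (fun c => b && all (fun u => c == (val u < 3)) uR) (fun c => all (fun u => c == inQ1 u) uQ)) Hv /Rb /Qb a3R a3Q andbA.
Qed.

Definition consT k (v : 'I_7) (b : tup 'I_7 k) : tup 'I_7 k.+1 :=
  [ffun i => if unlift ord0 i is Some j then b j else v].

Lemma upd_cons env off k v (b : tup 'I_7 k) :
  upd env off (consT v b) =1 upd (setv env off v) off.+1 b.
Proof.
move=> i; rewrite /upd /setv.
case: (ltngtP off i) => [lt|gt|eq].
-   case: insubP => [j hj ej|hn]; case: insubP => [j' hj' ej'|hn'] //.
  + rewrite ffunE; case: (unliftP ord0 j) => [j2 ej2|ej2].
      suff -> : j2 = j' by []; apply: val_inj; move: ej; rewrite ej2 /= /bump /= => ej.
      rewrite ej'; lia.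
    by move: ej; rewrite ej2 /=; lia.
  + by move: hn'; rewrite /= in hj; lia.
  + by move: hn; rewrite /= in hj'; lia.
- by [].
- rewrite eq subnn.
  case: insubP => [j _ ej|] //; rewrite ffunE.
  have -> : j = ord0 by apply: val_inj.
  by rewrite unlift_none.
Qed.

Lemma odd_sumF (I : finType) (F : I -> nat) :
  odd (\sum_i F i) = odd #|[pred i | odd (F i)]|.
Proof.
rewrite -sum1_card [X in _ = odd X]big_mkcond /=.
apply: (@big_rec2 nat nat (fun a b => odd a = odd b)) => //= i y1 y2 _ h.
rewrite !oddD h !inE /=; by case: (odd (F i)).
Qed.

Lemma card_cons k (P : pred (tup 'I_7 k.+1)) :
  #|P| = \sum_v #|[pred b | P (consT v b)]|.
Proof.
rewrite -sum1_card.
have bij : bijective (fun p : 'I_7 * tup 'I_7 k => consT p.1 p.2).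
  exists (fun b : tup 'I_7 k.+1 => (b ord0, [ffun j => b (lift ord0 j)])).
    move=> [v b] /=; rewrite ffunE unlift_none; congr pair.
    by apply/ffunP => j; rewrite !ffunE liftK.
  move=> b; apply/ffunP => i; rewrite ffunE.
  by case: (unliftP ord0 i) => [j ->|->]; rewrite ?ffunE.
rewrite (reindex _ (onW_bij _ bij)) /=.
symmetry; under eq_bigr do rewrite -sum1_card.
rewrite pair_big_dep /=.
by apply: eq_bigl => p; rewrite !inE.
Qed.

Lemma elimk k : forall off L, exists L', forall env,
  odd #|[pred b : tup 'I_7 k | gsat (upd env off b) L]| = gsat env L'.
Proof.
elim: k => [|k IH] off L.
- exists L => env.
  have E : forall b : tup 'I_7 0, upd env off b =1 env.
    move=> b i; rewrite /upd; case: ifP => // _; case: insubP => [[j hj] _ _|] //.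
  rewrite (eq_card (B := [pred b : tup 'I_7 0 | gsat env L])); last first.
    by move=> b; rewrite !inE (gsat_ext _ (E b)).
  case: (gsat env L).
    rewrite (eq_card (B := predT)) //.
    by rewrite (_ : #|predT| = #|{ffun 'I_0 -> 'I_7}|) // card_ffun !card_ord.
  by rewrite eq_card0.
- have [L1 H1] := IH off.+1 L.
  have [L2 H2] := elim1 off L1.
  exists L2 => env.
  rewrite card_cons odd_sumF -H2; congr odd; apply: eq_card => v; rewrite !inE -H1.
  congr odd; apply: eq_card => b; rewrite !inE.
  exact: gsat_ext (upd_cons env off v b).
Qed.

Lemma atom_g a : exists g, forall env, atom_sat Hs env a = gas env g.
Proof.
case: a => [r args|i j]; last by exists (GEq (TV i) (TV j)).
case: r => [|[|r]].
- case: args => [|i [|j [|? ?]]]; try by exists GF.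
  by exists (GR (TV i) (TV j)) => env; rewrite /atom_sat /= inE !ffunE.
- case: args => [|i [|j [|? ?]]]; try by exists GF.
  by exists (GQ (TV i) (TV j)) => env; rewrite /atom_sat /= inE !ffunE.
- case: (ltnP r 7) => hr.
    have E : nthrel Hs r.+2 = Tagged (relS 'I_7) (relC (nth ord0 (enum 'I_7) r)).
      by rewrite /nthrel /= (nth_map ord0) // size_enum_ord.
    case: args => [|i [|? ?]].
    + by exists GF => env; rewrite /atom_sat E.
    + by exists (GEq (TV i) (TC (nth ord0 (enum 'I_7) r))) => env;
        rewrite /atom_sat E /= inE ffunE.
    + by exists GF => env; rewrite /atom_sat E.
  have E : nthrel Hs r.+2 = Tagged (relS 'I_7) (set0 : {set tup 'I_7 0}).
    by rewrite /nthrel /= nth_default // size_map size_enum_ord.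
  by exists GF => env; rewrite /atom_sat E /= inE andbF.
Qed.

Lemma phi_g Phi : exists L, forall env, all (atom_sat Hs env) Phi = gsat env L.
Proof.
elim: Phi => [|a Phi [L HL]]; first by exists [::].
have [g Hg] := atom_g a.
by exists (g :: L) => env /=; rewrite Hg HL.
Qed.

Lemma satq_g bs : forall off Phi, exists L, forall env,
  sat_q Hs bs off env Phi = gsat env L.
Proof.
elim: bs => [|k bs IH] off Phi; first exact: phi_g.
have [L1 H1] := IH (off + k) Phi.
have [L2 H2] := elimk k off L1.
exists L2 => env /=; rewrite -H2; congr odd; apply: eq_card => b.
by rewrite !inE H1.
Qed.

Lemma upd0 env k (b : tup 'I_7 k) i (h : i < k) : upd env 0 b i = b (Ordinal h).
Proof.
rewrite /upd subn0 /=; case: insubP => [j _ ej|]; last by rewrite /= h.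
by have -> : j = Ordinal h by apply: val_inj.
Qed.

Lemma upd0' env k (b : tup 'I_7 k) i : k <= i -> upd env 0 b i = env i.
Proof.
move=> h; rewrite /upd subn0 /=; case: insubP => [j hj _|] //.
by move: hj; rewrite /= ltnNge h.
Qed.

Lemma mixE (E : rel 'I_7) :
  (forall a b, E a b = E b a) -> (forall a b c, E a b -> E b c -> E a c) ->
  forall w1 x1 y1 z1 w2 x2 y2 z2,
  (w1 = z1 /\ x1 = y1) \/ (w1 = y1 /\ x1 = z1) ->
  (w2 = z2 /\ x2 = y2) \/ (w2 = y2 /\ x2 = z2) ->
  E x1 x2 -> E y1 y2 -> E z1 z2 -> E w1 w2.
Proof.
move=> sy tr w1 x1 y1 z1 w2 x2 y2 z2 h1 h2 ex ey ez.
case: h1 => [[-> e1]|[-> e1]]; case: h2 => [[-> e2]|[-> e2]]; subst => //.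
all: have sy' : forall a b, E a b -> E b a by move=> a b; rewrite sy.
all: eauto 7.
Qed.

Lemma rect_g n (S : {set tup 'I_7 n}) L env0 :
  (forall a, (a \in S) = gsat (upd env0 0 a) L) -> rectangular S.
Proof.
move=> HS I _ _ x y z; rewrite !HS => hx hy hz hxy hxz.
set w := [ffun i => if i \in I then z i else y i].
have Ht : forall t, (ev (upd env0 0 w) t = ev (upd env0 0 z) t /\ ev (upd env0 0 x) t = ev (upd env0 0 y) t)
    \/ (ev (upd env0 0 w) t = ev (upd env0 0 y) t /\ ev (upd env0 0 x) t = ev (upd env0 0 z) t).
  case=> [i|c] /=; last by left.
  case: (ltnP i n) => h; last by left; rewrite !upd0'.
  rewrite !upd0 /w ffunE; case: ifP => hi.
    by left; split=> //; rewrite hxy.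
  by right; split=> //; rewrite hxz // hi.
elim: L hx hy hz {HS} => //= g L IH /andP[gx Lx] /andP[gy Ly] /andP[gz Lz].
rewrite IH // andbT.
case: g gx gy gz => //= s t gx gy gz.
- apply: (mixE (E := fun a b => a == b) _ _ (Ht s) (Ht t) gx gy gz); [exact: eq_sym | by move=> a b c /eqP -> /eqP ->].
- apply: (mixE (E := Rb) _ _ (Ht s) (Ht t) gx gy gz); [move=> a b; exact: eq_sym | by move=> a b c; rewrite /Rb => /eqP -> /eqP ->].
- apply: (mixE (E := Qb) _ _ (Ht s) (Ht t) gx gy gz); [move=> a b; exact: eq_sym | by move=> a b c; rewrite /Qb => /eqP -> /eqP ->].
Qed.

Lemma rigid_Hs : rigid2 Hs.
Proof.
move=> [s [Ha Ho]].
have s1 : s = 1%g.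
  apply/permP => a; rewrite perm1.
  have hr : (val a).+2 < size Hs by rewrite /= size_map size_enum_ord ltnS ltnS.
  have Ea : nth ord0 (enum 'I_7) a = a by apply: val_inj; rewrite /= nth_enum_ord.
  have E : nthrel Hs (val a).+2 = Tagged (relS 'I_7) (relC a).
    by rewrite /nthrel /= (nth_map ord0) ?size_enum_ord // Ea.
  move: (Ha _ hr); rewrite E => /(_ (tup1 a)).
  by rewrite !inE !ffunE eqxx => /esym/eqP.
by move: Ho; rewrite s1 order1.
Qed.

Lemma srect_Hs : strongly_rect2 Hs.
Proof.
move=> n S _ [bs [Phi [_ HS]]].
have [L HL] := satq_g bs n Phi.
apply: (@rect_g n S L (fun _ => ord0)) => a.
by rewrite (HS (fun _ => ord0)) HL.
Qed.

Lemma pairT0 (a b : tup 'I_7 1) : pairT a b ord0 = a ord0.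
Proof.
rewrite /pairT ffunE.
have -> : (ord0 : 'I_(1 + 1)) = lshift 1 (ord0 : 'I_1) by apply: val_inj.
by rewrite -/(unsplit (inl _)) unsplitK.
Qed.

Lemma pairT1 (a b : tup 'I_7 1) : pairT a b ord_max = b ord0.
Proof.
rewrite /pairT ffunE.
have -> : (ord_max : 'I_(1 + 1)) = rshift 1 (ord0 : 'I_1) by apply: val_inj.
by rewrite -/(unsplit (inr _)) unsplitK.
Qed.

Lemma pairT0' (a b : tup 'I_7 1) : pairT a b (ord0 : 'I_2) = a ord0.
Proof. exact: pairT0. Qed.
Lemma pairT1' (a b : tup 'I_7 1) : pairT a b (ord_max : 'I_2) = b ord0.
Proof. exact: pairT1. Qed.

Lemma pairR (a b : tup 'I_7 1) : (pairT a b \in (relR : {set tup 'I_7 (1 + 1)})) = Rb (a ord0) (b ord0).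
Proof. by rewrite inE pairT0 pairT1. Qed.
Lemma pairQ (a b : tup 'I_7 1) : (pairT a b \in (relQ : {set tup 'I_7 (1 + 1)})) = Qb (a ord0) (b ord0).
Proof. by rewrite inE pairT0 pairT1. Qed.

Lemma card_tup1 (P : pred 'I_7) : #|[pred c : tup 'I_7 1 | P (c ord0)]| = #|P|.
Proof.
rewrite -!sum1_card.
have bij : bijective (fun v : 'I_7 => ([ffun _ => v] : tup 'I_7 1)).
  exists (fun c : tup 'I_7 1 => c ord0); first by move=> v; rewrite ffunE.
  move=> c; apply/ffunP => i; rewrite ffunE; congr (c _); apply: val_inj.
  by case: i => [[]].
rewrite (reindex _ (onW_bij _ bij)) /=.
by apply: eq_bigl => v; rewrite !inE ffunE.
Qed.

Lemma compRQ : @comp2 'I_7 1 relR relQ (tup1 (el 0)) (tup1 (el 5)).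
Proof.
rewrite /comp2 (eq_card (B := [pred c : tup 'I_7 1 |
   (fun v => Rb (el 0) v && Qb v (el 5)) (c ord0)])); last first.
  by move=> c; rewrite !inE !pairT0' !pairT1' !ffunE.
rewrite (card_tup1 (fun v => Rb (el 0) v && Qb v (el 5))) -sum1_card big_mkcond /= !big_ord_recl big_ord0 /= ?inE /=.
by rewrite /Rb /Qb /inQ1 !el_val.
Qed.

Lemma compQR : ~~ @comp2 'I_7 1 relQ relR (tup1 (el 0)) (tup1 (el 5)).
Proof.
rewrite /comp2 (eq_card (B := [pred c : tup 'I_7 1 |
   (fun v => Qb (el 0) v && Rb v (el 5)) (c ord0)])); last first.
  by move=> c; rewrite !inE !pairT0' !pairT1' !ffunE.
rewrite (card_tup1 (fun v => Qb (el 0) v && Rb v (el 5))) -sum1_card big_mkcond /= !big_ord_recl big_ord0 /= ?inE /=.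
by rewrite /Rb /Qb /inQ1 !el_val.
Qed.

Lemma defT : definable2 Hs (setT : {set tup 'I_7 1}).
Proof. by exists [::], [::]; split => // env a; rewrite inE. Qed.

Lemma upd01 env (a : tup 'I_7 (1 + 1)) : upd env 0 a 0 = a ord0.
Proof. by rewrite (upd0 env a (isT : 0 < 1 + 1)); congr (a _); apply: val_inj. Qed.
Lemma upd11 env (a : tup 'I_7 (1 + 1)) : upd env 0 a 1 = a ord_max.
Proof. by rewrite (upd0 env a (isT : 1 < 1 + 1)); congr (a _); apply: val_inj. Qed.

Lemma congX (X : {set tup 'I_7 2}) r (f : 'I_7 -> bool) :
  nthrel Hs r = Tagged (relS 'I_7) X -> r < 2 ->
  (forall t : tup 'I_7 2, (t \in X) = (f (t ord0) == f (t ord_max))) ->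
  cong2 Hs (setT : {set tup 'I_7 1}) (X : {set tup 'I_7 (1 + 1)}).
Proof.
move=> E hr HX; split.
- exists [::], [:: ARel r [:: 0; 1]]; split.
    by rewrite /= E /= andbT; case: r hr E => [|[|]].
  move=> env a /=; rewrite /atom_sat E /= andbT HX HX !ffunE /=.
  by rewrite upd01 upd11.
- by move=> a b; rewrite !inE.
- by move=> a _; rewrite HX pairT0' pairT1'.
- by move=> a b; rewrite !HX !pairT0' !pairT1' eq_sym.
- by move=> a b c; rewrite !HX !pairT0' !pairT1' => /eqP -> /eqP ->.
Qed.

Lemma not_perm : ~ cong_permutable2 Hs.
Proof.
move=> Hp.
have cR := @congX relR 0 (fun v => val v < 3) erefl isT ltac:(by move=> t; rewrite inE).
have cQ := @congX relQ 1 inQ1 erefl isT ltac:(by move=> t; rewrite inE).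
have := Hp 1 setT relR relQ defT cR cQ (tup1 (el 0)) (tup1 (el 5)).
by move: compRQ compQR => -> /negbTE ->.
Qed.

Theorem mainTheorem15 :
  rigid2 Hs /\ strongly_rect2 Hs /\ ~ cong_permutable2 Hs /\
  (@comp2 'I_7 1 relR relQ (tup1 (el 0)) (tup1 (el 5)) /\
   ~~ @comp2 'I_7 1 relQ relR (tup1 (el 0)) (tup1 (el 5))).
Proof.
split; first exact: rigid_Hs.
split; first exact: srect_Hs.
split; first exact: not_perm.
split; [exact: compRQ | exact: compQR].
Qed.
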